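(* Let $X$ and $Y$ be arbitrary (completely regular) spaces and $F\colon\mathcal{K}(X)\to\mathcal{K}(Y)$ a map satisfying: (1) if $K,L\in\mathcal{K}(X)$ and $K\subset L$, then $F(K)\subset F(L)$; $(2)_c$ for each countable $L\in\mathcal{K}(Y)$ there is $K\in\mathcal{K}(X)$ with $L\subset F(K)$; $(3)_c$ if $U\subset X$ and $V\subset Y$ are non-empty open sets such that for each countable compact $L\subset V$ there is a compact $K\subset U$ with $L\subset F(K)$, then for any open cover $\mathcal{W}$ of $U$ and any $y\in V$ there exist a finite $\mathcal{E}\subset\mathcal{W}$ and a neighborhood $V_y$ of $y$ such that every countable compact $L\subset V_y$ satisfies $L\subset F(K)$ for some compact $K\subset\bigcup\mathcal{E}$. Then $F$ is monotone set tri-quotient.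
   Context: $\mathcal{K}(X)$ is the set of compact subsets of $X$, $\mathcal{T}(X)$ the topology of $X$. $F\colon\mathcal{K}(X)\to 2^Y$ is monotone if $K\subset L$ implies $F(K)\subset F(L)$; it is set tri-quotient if there is $s\colon\mathcal{T}(X)\to\mathcal{T}(Y)$ with: (str1) $s(U)\subset\bigcup\{F(K):K\in\mathcal{K}(X),K\subset U\}$; (str2) $s(X)=Y$; (str3) $U\subset V\Rightarrow s(U)\subset s(V)$; (str4) if $y\in s(U)$ and $\mathcal{W}$ is a cover of $\bigcup\{K\in F^{-1}(y):K\subset U\}$ by open subsets of $X$, then $y\in s(\bigcup\mathcal{E})$ for some finite $\mathcal{E}\subset\mathcal{W}$, where $F^{-1}(y)=\{K\in\mathcal{K}(X):y\in F(K)\}$. *)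

(* Defs.v *)
From mathcomp Require Import all_boot all_classical all_reals all_analysis.
Set Implicit Arguments. Unset Strict Implicit. Unset Printing Implicit Defensive.
Local Open Scope classical_set_scope.

(* A map F : K(X) -> 2^Y is represented by F : set X -> set Y; only its
   values on compact sets matter. *)

Definition monotone_on_compacts (X : topologicalType) (Y : Type)
    (F : set X -> set Y) : Prop :=
  forall K L : set X, compact K -> compact L -> K `<=` L -> F K `<=` F L.

(* Set tri-quotient maps; s : T(X) -> T(Y) is represented by
   s : set X -> set Y, constrained on open sets only. *)
Definition set_tri_quotient (X Y : topologicalType) (F : set X -> set Y) : Prop :=
  exists s : set X -> set Y,
    (forall U : set X, open U -> open (s U)) /\
    (* (str1) *)
    (forall U : set X, open U ->
       s U `<=` \bigcup_(K in [set K : set X | compact K /\ K `<=` U]) F K) /\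
    (* (str2) *)
    s setT = setT /\
    (* (str3) *)
    (forall U V : set X, open U -> open V -> U `<=` V -> s U `<=` s V) /\
    (* (str4) *)
    (forall (U : set X) (y : Y) (W : set (set X)), open U -> s U y ->
       (forall A, W A -> open A) ->
       \bigcup_(K in [set K : set X | compact K /\ K `<=` U /\ F K y]) K
         `<=` \bigcup_(A in W) A ->
       exists E : set (set X), [/\ finite_set E, E `<=` W &
         s (\bigcup_(A in E) A) y]).

(* Main.v *)
Require Import Defs.
From mathcomp Require Import all_boot all_classical all_reals all_analysis.
Local Open Scope classical_set_scope.

Lemma countableU1 (T : Type) (L : set T) (y : T) :
  countable L -> countable (L `|` [set y]).
Proof.
move=> cL.
apply: (@sub_countable _ _ _ (\bigcup_(b in [set: bool]) (if b then L else [set y]))).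
  apply: subset_card_le => x [Lx|yx]; first by exists true.
  by exists false.
apply: bigcup_countable; first exact: countableP.
by move=> [] _ //; exact: countable1.
Qed.

Theorem proposition2p4 (X Y : topologicalType)
  (hX : completely_regular_space X) (hXs : hausdorff_space X)
  (hY : completely_regular_space Y) (hYs : hausdorff_space Y)
  (F : set X -> set Y)
  (hFK : forall K : set X, compact K -> compact (F K))
  (h1 : forall K L : set X, compact K -> compact L -> K `<=` L -> F K `<=` F L)
  (h2 : forall L : set Y, compact L -> countable L ->
          exists K : set X, compact K /\ L `<=` F K)
  (h3 : forall (U : set X) (V : set Y),
          open U -> U !=set0 -> open V -> V !=set0 ->
          (forall L : set Y, countable L -> compact L -> L `<=` V ->
             exists K : set X, [/\ compact K, K `<=` U & L `<=` F K]) ->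
          forall W : set (set X), (forall A, W A -> open A) ->
          U `<=` \bigcup_(A in W) A ->
          forall y : Y, V y ->
          exists E : set (set X), exists Vy : set Y,
            [/\ finite_set E, E `<=` W, nbhs y Vy &
              forall L : set Y, countable L -> compact L -> L `<=` Vy ->
                exists K : set X,
                  [/\ compact K, K `<=` \bigcup_(A in E) A & L `<=` F K]]) :
  monotone_on_compacts F /\ set_tri_quotient F.
Proof.
split; first exact: h1.
pose P (U : set X) (V : set Y) := forall L : set Y, countable L -> compact L ->
  L `<=` V -> exists K : set X, [/\ compact K, K `<=` U & L `<=` F K].
exists (fun U => [set y | exists V, [/\ open V, V y & P U V]]).
split.
  move=> U _.
  have -> : [set y | exists V, [/\ open V, V y & P U V]] =
      \bigcup_(V in [set V | open V /\ P U V]) V.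
    apply/seteqP; split => y; first by move=> [V [oV Vy PV]]; exists V.
    by move=> [V [oV PV] Vy]; exists V.
  by apply: bigcup_open => V [].
split.
  move=> U _ y [V [oV Vy PV]].
  have [K [cK KU yK]] := PV [set y] (countable1 y) (@compact_set1 Y y)
    (fun z (e : z = y) => ltac:(by rewrite e)).
  by exists K => //; apply: yK.
split.
  apply/seteqP; split => // y _; exists setT; split => //; first exact: openT.
  move=> L cL kL _; have [K [cK LK]] := h2 L kL cL; by exists K.
split.
  move=> U V _ _ UV y [V0 [oV Vy PV]]; exists V0; split => // L cL kL LV.
  have [K [cK KU LK]] := PV L cL kL LV; exists K; split => //.
  exact: subset_trans UV.
move=> U y W oU [V [oV Vy PV]] oW CW.
pose O := \bigcup_(A in W) A.
have PUO : P (U `&` O) V.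
  move=> L cL kL LV.
  have [K [cK KU LK]] := PV (L `|` [set y]) (@countableU1 Y L y cL)
    (compactU kL (@compact_set1 Y y)) ltac:(by move=> z [/LV|->]).
  exists K; split => //; last by move=> z Lz; apply: LK; left.
  move=> x Kx; split; first exact: KU.
  apply: CW; exists K => //; split; [done|split; [done|]].
  by apply: LK; right.
have [[x0 Ux0]|U0] := pselect ((U `&` O) !=set0); last first.
  have U0' : U `&` O = set0 by apply/seteqP; split => // x h; exfalso; apply: U0; by exists x.
  exists set0; split; [exact: finite_set0|exact: sub0set|].
  exists V; split => // L cL kL LV.
  have [K [cK KU LK]] := PUO L cL kL LV; exists K; split => //.
  by rewrite U0' in KU; move=> z /KU.
have oUO : open (U `&` O) by apply: openI => //; apply: bigcup_open.
have [E [Vy' [fE EW nVy PE]]] := h3 _ _ oUO (ex_intro _ x0 Ux0) oV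
  (ex_intro _ y Vy) PUO W oW (fun z (h : (U `&` O) z) => h.2) y Vy.
exists E; split => //.
exists (Vy'°); split; [exact: open_interior| exact: nbhs_singleton (nbhs_interior nVy)|].
move=> L cL kL LV; apply: PE => //; apply: subset_trans LV _; exact: interior_subset.
Qed.
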